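(* For $k\geq 2$ let $S=\{0,1\}\cup\{2^{2^i}:1\leq i\leq k-1\}$ and $a=2^{2^k}$, and define on $(0,1]$ $$W=\frac{1}{g_S\,g_{\{a\}}}\left(\frac{g_{\{a\}}'\,g_S-g_S'\,g_{\{a\}}}{g_S+g_{\{a\}}}\right)^2 .$$ Then there is a constant $c>0$ (independent of $k$) such that for all sufficiently large $k$, $$\int_{1-\frac{1}{2a}}^{1}\sqrt{W(t)}\,\mathrm{d}t\geq\frac{c}{\sqrt{k}}.$$
   Context: $\mathbb{N}=\{0,1,2,\dots\}$. For a finite set $S\subseteq\mathbb{N}$ define $g_S(t)=\sum_{e\in S}t^{2e}$; in particular $g_{\{a\}}(t)=t^{2a}$. *)

(* Defs.v *)
From Stdlib Require Import Reals List.
Import ListNotations.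
Open Scope R_scope.

(* A finite set S of naturals, given as a duplicate-free list of exponents. *)
Definition gS (S : list nat) (t : R) : R :=
  fold_right (fun e acc => t ^ (2 * e) + acc) 0 S.

(* Its derivative g_S'(t) = sum_{e in S} (2e) t^(2e-1)  (formal derivative of
   the polynomial g_S). *)
Definition gS' (S : list nat) (t : R) : R :=
  fold_right (fun e acc => INR (2 * e) * t ^ (2 * e - 1) + acc) 0 S.

Definition Sk (k : nat) : list nat :=
  0%nat :: 1%nat :: map (fun i => Nat.pow 2 (Nat.pow 2 i)) (seq 1 (k - 1)).

Definition ak (k : nat) : nat := Nat.pow 2 (Nat.pow 2 k).

Definition W (k : nat) (t : R) : R :=
  let S := Sk k in
  let A := [ak k] in
  / (gS S t * gS A t) *
  ((gS' A t * gS S t - gS' S t * gS A t) / (gS S t + gS A t)) ^ 2.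

(* Main.v *)
Require Import Defs.
From Stdlib Require Import Reals List Lra Lia.
Import ListNotations.
Open Scope R_scope.

Lemma pw01 t n : 0 <= t <= 1 -> 0 <= t ^ n <= 1.
Proof. intros H; induction n; simpl; [lra|]. split; nra. Qed.

Lemma pw_anti t m n : 0 <= t <= 1 -> (m <= n)%nat -> t ^ n <= t ^ m.
Proof.
  intros H Hmn. replace n with (m + (n - m))%nat by lia. rewrite pow_add.
  pose proof (pw01 t m H). pose proof (pw01 t (n-m) H). nra.
Qed.

Lemma bern n y : 0 <= y <= 1 -> 1 - INR n * y <= (1 - y) ^ n.
Proof.
  intros H; induction n; [simpl; lra|].
  rewrite S_INR. change ((1-y)^(S n)) with ((1-y) * (1-y)^n). pose proof (pos_INR n). nra.
Qed.

Lemma gS_lower S t m : (forall e, In e S -> m <= t ^ (2 * e)) -> m * INR (length S) <= gS S t.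
Proof.
  induction S as [|e S IH]; intros H; [simpl; lra|].
  cbn [length]; rewrite S_INR. assert (m <= t^(2*e)) by (apply H; left; auto).
  assert (m * INR (length S) <= gS S t) by (apply IH; intros; apply H; right; auto).
  unfold gS in *. cbn [fold_right]. rewrite Rmult_plus_distr_l. lra.
Qed.

Lemma gS_upper S t : 0 <= t <= 1 -> gS S t <= INR (length S).
Proof.
  intros Ht; induction S as [|e S IH]; [simpl; lra|].
  cbn [length]; rewrite S_INR. pose proof (pw01 t (2*e) Ht). unfold gS in *. cbn [fold_right]. lra.
Qed.

Lemma gS'_bounds S t B : 0 <= t <= 1 -> (forall e, In e S -> INR e <= B) ->
  0 <= gS' S t <= 2 * B * INR (length S).
Proof.
  intros Ht; induction S as [|e S IH]; intros H; [simpl; lra|].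
  cbn [length]; rewrite S_INR. assert (INR e <= B) by (apply H; left; auto).
  assert (0 <= gS' S t <= 2 * B * INR (length S)) by (apply IH; intros; apply H; right; auto).
  pose proof (pw01 t (2*e-1) Ht). pose proof (pos_INR e).
  unfold gS' in *. cbn [fold_right]. rewrite mult_INR. simpl (INR 2). split; nra.
Qed.

Lemma cmul f g x : continuity_pt f x -> continuity_pt g x -> continuity_pt (fun t => f t * g t) x.
Proof. apply continuity_pt_mult. Qed.
Lemma cplus f g x : continuity_pt f x -> continuity_pt g x -> continuity_pt (fun t => f t + g t) x.
Proof. apply continuity_pt_plus. Qed.
Lemma cminus f g x : continuity_pt f x -> continuity_pt g x -> continuity_pt (fun t => f t - g t) x.
Proof. apply continuity_pt_minus. Qed.
Lemma cinv f x : continuity_pt f x -> f x <> 0 -> continuity_pt (fun t => / f t) x.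
Proof. apply continuity_pt_inv. Qed.
Lemma cdiv f g x : continuity_pt f x -> continuity_pt g x -> g x <> 0 -> continuity_pt (fun t => f t / g t) x.
Proof. apply continuity_pt_div. Qed.
Lemma cconst c x : continuity_pt (fun _ => c) x.
Proof. apply continuity_pt_const. intros a b; reflexivity. Qed.
Lemma cid x : continuity_pt (fun t => t) x.
Proof. apply derivable_continuous_pt, derivable_pt_id. Qed.
Lemma cpow f n x : continuity_pt f x -> continuity_pt (fun t => f t ^ n) x.
Proof. intros H; induction n; simpl. apply cconst. apply (cmul f (fun t => f t ^ n)); auto. Qed.

Lemma cgS S x : continuity_pt (gS S) x.
Proof.
  induction S as [|e S IH]; simpl. apply cconst.
  apply (cplus (fun t => t ^ (2*e)) (gS S)); auto. apply cpow, cid.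
Qed.
Lemma cgS' S x : continuity_pt (gS' S) x.
Proof.
  induction S as [|e S IH]; simpl. apply cconst.
  apply (cplus (fun t => INR (2*e) * t ^ (2*e-1)) (gS' S)); auto.
  apply (cmul (fun _ => INR (2*e))). apply cconst. apply cpow, cid.
Qed.
Lemma alg A B n G Gp x p : B >= 8 -> A = B*B -> n >= 4 -> n/4 <= G <= n -> 0<=Gp<=2*B*n ->
  1/4<=x<=1 -> x<=p ->
  A^2/(16*n) <= /(G*x) * ((2*A*p*G - Gp*x)/(G+x))^2.
Proof.
  intros HB HA Hn HG HGp Hx Hp.
  set (N := 2*A*p*G - Gp*x).
  assert (HAG : 2*B*n <= A*G) by (subst A; nra).
  assert (HN : A*x*G <= N).
  { unfold N. assert (Gp*x <= A*G*x) by nra. assert (2*A*x*G <= 2*A*p*G) by (subst A; nra). nra. }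
  assert (Gpos : 0 < G) by lra.
  assert (D : 0 < G*x*(G+x)^2) by (apply Rmult_lt_0_compat; [nra| nra]).
  replace (/(G*x) * (N/(G+x))^2) with (N^2 / (G*x*(G+x)^2)) by (field; split; lra).
  apply (Rmult_le_reg_r (16*n * (G*x*(G+x)^2))). nra.
  replace (A ^ 2 / (16 * n) * (16 * n * (G * x * (G + x) ^ 2))) with (A^2 * (G*x*(G+x)^2)) by (field; lra).
  replace (N ^ 2 / (G * x * (G + x) ^ 2) * (16 * n * (G * x * (G + x) ^ 2))) with (16*n*N^2) by (field; split; lra).
  assert (H1 : (G+x)^2 <= 4*G^2) by nra.
  assert (H2 : (A*x*G)^2 <= N^2) by (assert (0 <= A*x*G) by (subst A; nra); nra).
  assert (H3 : A^2*(G*x*(G+x)^2) <= A^2*(G*x*(4*G^2))).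
  { apply Rmult_le_compat_l. nra. apply Rmult_le_compat_l; nra. }
  assert (H4 : 16*G*(A*x*G)^2 <= 16*n*N^2).
  { apply Rmult_le_compat; nra. }
  assert (H5 : A^2*(G*x*(4*G^2)) <= 16*G*(A*x*G)^2).
  { replace (16*G*(A*x*G)^2) with ((A^2*(G*x*(4*G^2))) * (4*x)) by ring.
    assert (0 <= A^2*(G*x*(4*G^2))) by (apply Rmult_le_pos; [nra|]; apply Rmult_le_pos; nra). nra. }
  lra.
Qed.

Lemma Sk_len k : (1 <= k)%nat -> length (Sk k) = S k.
Proof. intros H. unfold Sk. cbn [length]. rewrite length_map, length_seq. lia. Qed.

Lemma Sk_le j e : In e (Sk (S j)) -> (e <= 2 ^ (2 ^ j))%nat.
Proof.
  unfold Sk. replace (S j - 1)%nat with j by lia.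
  pose proof (Nat.pow_le_mono_r 2 0 (2^j) ltac:(lia) ltac:(lia)). simpl in H.
  intros [H0|[H0|H0]]; try lia.
  apply in_map_iff in H0. destruct H0 as [i [Hi Hin]]. apply in_seq in Hin. subst e.
  apply Nat.pow_le_mono_r; [lia|]. apply Nat.pow_le_mono_r; lia.
Qed.

Lemma ak_sq j : ak (S j) = (2 ^ (2 ^ j) * 2 ^ (2 ^ j))%nat.
Proof. unfold ak. rewrite Nat.pow_succ_r', <- Nat.pow_add_r. f_equal. lia. Qed.

Lemma b16 j : (2 <= j)%nat -> 16 <= INR (2 ^ (2 ^ j)).
Proof.
  intros Hj. assert (H : (2 ^ (2 ^ 2) <= 2 ^ (2 ^ j))%nat).
  { apply Nat.pow_le_mono_r; [lia|]. apply Nat.pow_le_mono_r; lia. }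
  apply le_INR in H. rewrite INR_IZR_INZ in H at 1. simpl in H. lra.
Qed.

Lemma point j t : (2 <= j)%nat -> 1 - / (2 * INR (ak (S j))) <= t <= 1 ->
  0 < gS (Sk (S j)) t /\ 0 < gS [ak (S j)] t /\
  INR (ak (S j)) ^ 2 / (16 * (INR (S j) + 1)) <= W (S j) t.
Proof.
  intros Hj Ht.
  pose proof (b16 j Hj) as Hb. set (b := (2 ^ (2 ^ j))%nat) in *. set (a := ak (S j)) in *.
  assert (HA : INR a = INR b * INR b) by (unfold a; rewrite ak_sq, mult_INR; reflexivity).
  assert (Hab : (a = b * b)%nat) by (unfold a; rewrite ak_sq; reflexivity).
  assert (HA1 : INR a >= 1) by nra.
  assert (Hinv : / (2 * INR a) <= / 2) by (apply Rinv_le_contravar; lra).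
  assert (t01 : 0 <= t <= 1) by lra.
  assert (Hta : 1/2 <= t ^ a).
  { pose proof (bern a (1 - t) ltac:(lra)) as Hb'. replace (1 - (1 - t)) with t in Hb' by ring.
    assert (INR a * (1 - t) <= INR a * / (2 * INR a)) by (apply Rmult_le_compat_l; lra).
    replace (INR a * / (2 * INR a)) with (1/2) in H by (field; lra). lra. }
  assert (Hx : 1/4 <= t ^ (2 * a) <= 1).
  { rewrite Nat.mul_comm, pow_mult. pose proof (pw01 t a t01). simpl. nra. }
  assert (Hterm : forall e, In e (Sk (S j)) -> t ^ (2 * a) <= t ^ (2 * e)).
  { intros e He. apply pw_anti; auto. apply Sk_le in He. fold b in He. nia. }
  assert (Hlen : INR (length (Sk (S j))) = INR (S j) + 1) by (rewrite Sk_len by lia; apply S_INR).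
  assert (HG1 : 1/4 * INR (length (Sk (S j))) <= gS (Sk (S j)) t).
  { apply gS_lower. intros e He. specialize (Hterm e He). lra. }
  assert (HG2 := gS_upper (Sk (S j)) t t01).
  assert (HGp := gS'_bounds (Sk (S j)) t (INR b) t01
                  (fun e He => le_INR _ _ (Sk_le j e He))).
  assert (Ha1 : gS [a] t = t ^ (2 * a)) by (unfold gS; cbn [fold_right]; ring).
  assert (Ha2 : gS' [a] t = 2 * INR a * t ^ (2 * a - 1)) by
    (unfold gS'; cbn [fold_right]; rewrite mult_INR; simpl (INR 2); ring).
  assert (Hp : t ^ (2 * a) <= t ^ (2 * a - 1)) by (apply pw_anti; auto; lia).
  rewrite Hlen in HG1, HG2, HGp.
  pose proof (pos_INR j). rewrite S_INR in *.
  split; [lra|]. split; [rewrite Ha1; lra|].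
  unfold W; cbv zeta. fold a. rewrite Ha1, Ha2.
  apply (alg (INR a) (INR b) (INR j + 1 + 1)); try lra.
  assert (2 <= INR j) by (replace 2 with (INR 2) by (simpl; ring); apply le_INR; auto). lra.
Qed.

Lemma cW k x : 0 < gS (Sk k) x -> 0 < gS [ak k] x -> continuity_pt (W k) x.
Proof.
  intros H1 H2. unfold W. cbv zeta.
  apply (cmul (fun t => / (gS (Sk k) t * gS [ak k] t))
              (fun t => ((gS' [ak k] t * gS (Sk k) t - gS' (Sk k) t * gS [ak k] t) /
                         (gS (Sk k) t + gS [ak k] t)) ^ 2)).
  - apply (cinv (fun t => gS (Sk k) t * gS [ak k] t)).
    + apply (cmul (gS (Sk k)) (gS [ak k])); apply cgS.
    + apply Rgt_not_eq. apply Rmult_lt_0_compat; auto.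
  - apply (cpow (fun t => (gS' [ak k] t * gS (Sk k) t - gS' (Sk k) t * gS [ak k] t) /
                         (gS (Sk k) t + gS [ak k] t))).
    apply (cdiv (fun t => gS' [ak k] t * gS (Sk k) t - gS' (Sk k) t * gS [ak k] t)
                (fun t => gS (Sk k) t + gS [ak k] t)).
    + apply (cminus (fun t => gS' [ak k] t * gS (Sk k) t) (fun t => gS' (Sk k) t * gS [ak k] t)).
      * apply (cmul (gS' [ak k]) (gS (Sk k))); [apply cgS' | apply cgS].
      * apply (cmul (gS' (Sk k)) (gS [ak k])); [apply cgS' | apply cgS].
    + apply (cplus (gS (Sk k)) (gS [ak k])); apply cgS.
    + apply Rgt_not_eq. lra.
Qed.

Theorem lemma6p3 :
  exists c : R, 0 < c /\
  exists K : nat, forall k : nat, (2 <= k)%nat -> (K <= k)%nat ->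
    exists pr : Riemann_integrable (fun t => sqrt (W k t))
                  (1 - / (2 * INR (ak k))) 1,
      RiemannInt pr >= c / sqrt (INR k).
Proof.
  exists (1/16). split; [lra|]. exists 3%nat. intros k _ Hk.
  destruct k as [|j]; [lia|]. assert (Hj : (2 <= j)%nat) by lia.
  set (A := INR (ak (S j))). set (n := INR (S j) + 1).
  assert (HA : 1 <= A).
  { unfold A. rewrite ak_sq, mult_INR. pose proof (b16 j Hj). nra. }
  assert (Hlo : 1 - / (2 * A) <= 1).
  { assert (0 < / (2 * A)) by (apply Rinv_0_lt_compat; lra). lra. }
  assert (pr : Riemann_integrable (fun t => sqrt (W (S j) t)) (1 - / (2 * A)) 1).
  { apply continuity_implies_RiemannInt; auto. intros x Hx.
    destruct (point j x Hj Hx) as [P1 [P2 P3]].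
    apply (continuity_pt_comp (W (S j)) sqrt). apply cW; auto.
    apply continuity_pt_sqrt. assert (0 <= A ^ 2 / (16 * n)).
    { unfold n. pose proof (pos_INR (S j)). apply Rmult_le_pos; [nra|].
      apply Rlt_le, Rinv_0_lt_compat; lra. }
    unfold A, n in *. lra. }
  exists pr.
  assert (Hpw : forall x, 1 - / (2 * A) < x < 1 -> fct_cte (sqrt (A ^ 2 / (16 * n))) x <= sqrt (W (S j) x)).
  { intros x Hx. unfold fct_cte. apply sqrt_le_1_alt.
    destruct (point j x Hj ltac:(unfold A in Hx; lra)) as [_ [_ P3]]. exact P3. }
  pose proof (RiemannInt_P19 (RiemannInt_P14 (1 - / (2 * A)) 1 (sqrt (A ^ 2 / (16 * n)))) pr Hlo Hpw)
    as Hcmp.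
  rewrite RiemannInt_P15 in Hcmp.
  assert (Hn : 0 < n) by (unfold n; pose proof (pos_INR (S j)); lra).
  assert (Hsn : 0 < sqrt n) by (apply sqrt_lt_R0; lra).
  assert (Hk0 : 0 < INR (S j)) by (apply lt_0_INR; lia).
  assert (Hsk : 0 < sqrt (INR (S j))) by (apply sqrt_lt_R0; lra).
  assert (Hsq : sqrt (A ^ 2 / (16 * n)) = A / (4 * sqrt n)).
  { replace (A ^ 2 / (16 * n)) with ((A / (4 * sqrt n)) * (A / (4 * sqrt n))).
    apply sqrt_square. apply Rmult_le_pos; [lra|]. apply Rlt_le, Rinv_0_lt_compat; lra.
    field_simplify; [|lra|lra]. rewrite pow2_sqrt by lra. field; lra. }
  rewrite Hsq in Hcmp.
  assert (Hle : sqrt n <= 2 * sqrt (INR (S j))).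
  { replace (2 * sqrt (INR (S j))) with (sqrt ((2 * sqrt (INR (S j))) * (2 * sqrt (INR (S j))))).
    apply sqrt_le_1_alt. replace ((2 * sqrt (INR (S j))) * (2 * sqrt (INR (S j)))) with
      (4 * (sqrt (INR (S j)) * sqrt (INR (S j)))) by ring.
    rewrite sqrt_sqrt by lra. unfold n. assert (1 <= INR (S j)) by (apply (le_INR 1); lia). lra.
    apply sqrt_square. lra. }
  replace (A / (4 * sqrt n) * (1 - (1 - / (2 * A)))) with (/ (8 * sqrt n)) in Hcmp by (field; lra).
  replace (1 / 16 / sqrt (INR (S j))) with (/ (16 * sqrt (INR (S j)))) by (field; lra).
  apply Rle_ge. eapply Rle_trans; [|apply Hcmp].
  apply Rinv_le_contravar; [apply Rmult_lt_0_compat|]; lra.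
Qed.
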